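(* Consider the triggered urn model described in the context, with trigger probabilities $(p_n)_{n\ge1}\subset(0,1)$ and the convention $p_0=1$. Let $C_n=\sum_{i=0}^{n-1}B_i$ be the number of distinct colors present in the urn at time $n$, and $C_\infty=\sup_n C_n$. Then: (1) If $\sum_{n=0}^\infty p_n<\infty$, then $C_\infty<\infty$ almost surely. (2) If $\sum_{n=0}^\infty p_n=\infty$, then $C_\infty=\infty$ almost surely and $C_n\big/\sum_{i=0}^{n-1}p_i\to 1$ almost surely. In particular, if moreover $\sum_{n=1}^\infty(1-p_n)<\infty$, then there exists an (almost surely finite) random time $N$ such that for every time $n\ge N$ a new color is observed; hence each color is observed only a finite number of times, and only finitely many colors end up being observed more than once.
   Context: Triggered (FAQ) urn model. The urn is empty at time $0$. Let $B_0=1$ and let $(B_n)_{n\ge1}$ be independent Bernoulli random variables with $\Pr(B_n=1)=p_n\in(0,1)$ (write $p_0=1$); the $B$'s are independent of everything else in the construction. Let $F:[1,\infty)\to[0,\infty)$ be strictly increasing with $F(1)>0$ (the update function). Colors are labelled $1,2,\dots$ in order of first appearance, and a history sequence $\mathcal S=(S_n)_{n\ge1}$ records one color per time step. For a color $c$, $K_{n,c}$ denotes the number of times $c$ has been registered in $\mathcal S$ up to and including time $n$; at time $n$ the urn contains, for each color $c$ already present, a weight (number of balls) $F(K_{n,c})$. At each time $n\ge1$: if $B_{n-1}=1$ (trigger), a new color (not yet present) is added with weight $F(1)$ and registered in $\mathcal S$; if $B_{n-1}=0$, a color $c$ among those present is drawn with probability $F(K_{n-1,c})/\sum_{c'}F(K_{n-1,c'})$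 (sum over colors present at time $n-1$), it is registered in $\mathcal S$, and its weight becomes $F(K_{n,c})$. *)

(* Defs.v *)
From HB Require Import structures.
From mathcomp Require Import all_boot all_order all_algebra.
From mathcomp Require Import all_classical all_reals all_analysis.
Set Implicit Arguments. Unset Strict Implicit. Unset Printing Implicit Defensive.
Import Order.TTheory GRing.Theory Num.Theory.
Local Open Scope ring_scope.

(* State: [c] = number of colours currently present (colours are 1..c),
   [K j] = number of times colour j has been registered so far.
   [bs] = (B_0, ..., B_{N-1}), [ss] = (S_1, ..., S_N). *)
Fixpoint urn_path_factor (R : realType) (F : R -> R) (c : nat) (K : nat -> nat)
    (bs : seq bool) (ss : seq nat) : R :=
  match bs, ss with
  | b :: bs', s :: ss' =>
    if b then
      (if s == c.+1 then 1 else 0) *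
      urn_path_factor F c.+1 (fun j => if j == c.+1 then 1%N else K j) bs' ss'
    else
      (if (1 <= s <= c)%N
       then F (K s)%:R / (\sum_(1 <= j < c.+1) F (K j)%:R) else 0) *
      urn_path_factor F c (fun j => if j == s then (K j).+1 else K j) bs' ss'
  | _, _ => 1
  end.

Definition urn_path_prob (R : realType) (p : nat -> R) (F : R -> R)
    (bs : seq bool) (ss : seq nat) : R :=
  (\prod_(i < size bs) (if nth false bs i then p i else 1 - p i)) *
  urn_path_factor F 0 (fun _ => 0%N) bs ss.

Definition urn_cylinder (T : Type) (B : nat -> T -> bool) (S : nat -> T -> nat)
    (bs : seq bool) (ss : seq nat) : set T :=
  [set w | (forall i, (i < size bs)%N -> B i w = nth false bs i) /\
           (forall i, (i < size ss)%N -> S i.+1 w = nth 0%N ss i)].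

Definition ncolors (T : Type) (B : nat -> T -> bool) (n : nat) (w : T) : nat :=
  \sum_(i < n) (B i w : nat).

(* Main.v *)
Require Import Defs.
From HB Require Import structures.
From mathcomp Require Import all_boot all_order all_algebra.
From mathcomp Require Import all_classical all_reals all_analysis.
From mathcomp Require Import ring lra zify.
Import Order.TTheory GRing.Theory Num.Theory numFieldNormedType.Exports.
Local Open Scope classical_set_scope.
Local Open Scope ring_scope.
Set Implicit Arguments. Unset Strict Implicit. Unset Printing Implicit Defensive.
Lemma ratio_bound (R : realType) (x s sa sb Ca Cn Cb e y K0 : R) :
  0 < e -> 16 / e < K0 -> K0 <= x -> 1 <= x -> 4 / e < y -> 1 <= y ->
  x * x <= sa -> (x + 1) * (x + 1) <= sb -> sb <= (x + 1) * (x + 1) + 1 ->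
  x * x <= s -> s < (x + 1) * (x + 1) -> Ca <= Cn -> Cn <= Cb ->
  `|Ca - sa| <= sa / y -> `|Cb - sb| <= sb / y ->
  `|1 - Cn / s| <= e.
Proof.
move=> he hK0 hKx hx1 hy hy1 hsa hsb1 hsb2 hk hlt hCa hCb cha chb.
have hK1 : 16 < K0 * e by rewrite -ltr_pdivrMr.
have hex : 16 <= e * x.
  have : e * K0 <= e * x by apply: ler_wpM2l; [exact: ltW | exact: hKx].
  clear -hK1; move=> h; lra.
have y0 : 0 < y by clear -hy1; lra.
set dl := y^-1.
have dl0 : 0 < dl by rewrite invr_gt0.
have e1 : dl * y = 1 by rewrite mulVf // lt0r_neq0.
have hy4 : 4 < y * e by rewrite -ltr_pdivrMr.
have hdl : 4 * dl < e.
  move: hy4; rewrite -(ltr_pM2l dl0) mulrA e1 mul1r; clear; move=> h; lra.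
have hdl1 : dl <= 1 by rewrite invf_le1.
move: cha chb; rewrite !ler_norml => /andP[ca1 ca2] /andP[cb1 cb2].
have hxx : 1 <= x * x by apply: mulr_ege1.
have s0 : 0 < s by clear -hxx hk; lra.
have -> : 1 - Cn / s = (s - Cn) / s by field; rewrite lt0r_neq0.
have f1 : sa / y = sa * dl by [].
have f2 : sb / y = sb * dl by [].
rewrite f1 f2 in ca1 ca2 cb1 cb2.
have g1 : dl * (x * x) <= dl * s by apply: ler_wpM2l; [exact: ltW | exact: hk].
have g2 : 16 * x <= e * s.
  have h1 : e * (x * x) <= e * s by apply: ler_wpM2l; [exact: ltW | exact: hk].
  have h2 : 16 * x <= (e * x) * x by apply: ler_wpM2r; [clear -hx1; lra | exact: hex].
  clear -h1 h2; lra.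
have g3 : dl * s <= e / 4 * s by apply: ler_wpM2r; [exact: ltW | clear -hdl; lra].
have g4 : sb * dl <= ((x + 1) * (x + 1) + 1) * dl by apply: ler_wpM2r; [exact: ltW | exact: hsb2].
have g5 : 0 <= (sa - x * x) * (1 - dl) by apply: mulr_ge0; [clear -hsa | clear -hdl1]; lra.
have g6 : dl * x <= x.
  have : dl * x <= 1 * x by apply: ler_wpM2r; [clear -hx1; lra | exact: hdl1].
  clear; move=> h; lra.
apply/andP; split; [rewrite ler_pdivlMr // | rewrite ler_pdivrMr //].
  clear -hCb cb2 g4 hsb2 hk g1 g3 g6 g2 hx1 hdl1 dl0; lra.
clear -hCa ca1 g5 hlt g1 g3 g2 hx1; lra.
Qed.
Section Comb.
Variables (R : realType) (p : nat -> R) (F : R -> R).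
Hypotheses (hp0 : p 0%N = 1) (hp : forall n, (1 <= n)%N -> 0 < p n < 1)
  (hF1 : 0 < F 1) (hFinc : forall x y, 1 <= x -> x < y -> F x < F y).

Lemma Fpos k : (1 <= k)%N -> 0 < F k%:R.
Proof.
case: k => // -[|k] _; first by rewrite mulr1n.
have := hFinc (x := 1) (y := k.+2%:R) (lexx 1).
rewrite ltr1n => /(_ isT) h; exact: lt_trans hF1 h.
Qed.

Lemma p01 n : 0 <= p n <= 1.
Proof.
case: n => [|n]; first by rewrite hp0 ler01 lexx.
by have /andP[h1 h2] := @hp n.+1 isT; rewrite (ltW h1) (ltW h2).
Qed.

Fixpoint sseqs (M : nat) (N : nat) : seq (seq nat) :=
  if N is N'.+1 then [seq s :: t | s <- iota 0 M, t <- sseqs M N'] else [:: [::]].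

Lemma size_sseqs M N ss : ss \in sseqs M N -> size ss = N.
Proof.
elim: N ss => [|N IH] ss /=; first by rewrite inE => /eqP->.
by case/allpairsP => -[s t] /= [_ ht ->] /=; rewrite (IH _ ht).
Qed.

Lemma uniq_sseqs M N : uniq (sseqs M N).
Proof.
elim: N => //= N IH; apply: allpairs_uniq => //; first exact: iota_uniq.
by move=> [a b] [c e] _ _ /= [-> ->].
Qed.

Lemma sum_sseqsS (f : seq nat -> R) M N :
  \sum_(ss <- sseqs M N.+1) f ss = \sum_(s <- iota 0 M) \sum_(t <- sseqs M N) f (s :: t).
Proof. exact: big_allpairs_dep. Qed.

Fixpoint bseqs (N : nat) : seq (seq bool) :=
  if N is N'.+1 then [seq rcons bs b | bs <- bseqs N', b <- [:: true; false]] else [:: [::]].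

Lemma size_bseqs N bs : bs \in bseqs N -> size bs = N.
Proof.
elim: N bs => [|N IH] bs; first by rewrite inE => /eqP->.
by case/allpairsP => -[s t] /= [hs _ ->] /=; rewrite size_rcons (IH _ hs).
Qed.

Lemma uniq_bseqs N : uniq (bseqs N).
Proof.
elim: N => // N IH; apply: allpairs_uniq => //.
by move=> [a b] [c e] _ _ /= /rcons_inj [-> ->].
Qed.

Lemma sum_bseqsS (f : seq bool -> R) N :
  \sum_(bs <- bseqs N.+1) f bs = \sum_(bs <- bseqs N) (f (rcons bs true) + f (rcons bs false)).
Proof.
rewrite big_allpairs_dep; apply: eq_bigr => bs _.
by rewrite big_cons big_cons big_nil /= addr0.
Qed.

Definition pi_b (bs : seq bool) : R :=
  \prod_(i < size bs) (if nth false bs i then p i else 1 - p i).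

Lemma pi_rcons bs b :
  pi_b (rcons bs b) = pi_b bs * (if b then p (size bs) else 1 - p (size bs)).
Proof.
rewrite /pi_b size_rcons big_ord_recr /= nth_rcons ltnn eqxx; congr (_ * _).
by apply: eq_bigr => i _; rewrite nth_rcons ltn_ord.
Qed.

Lemma pi_ge0 bs : 0 <= pi_b bs.
Proof.
apply: prodr_ge0 => i _; have /andP[h1 h2] := p01 i.
by case: ifP => _; lra.
Qed.

Definition cnt (bs : seq bool) : nat := (\sum_(i < size bs) (nth false bs i : nat))%N.

Lemma cnt_rcons bs b : cnt (rcons bs b) = (cnt bs + b)%N.
Proof.
rewrite /cnt size_rcons big_ord_recr /= nth_rcons ltnn eqxx; congr (_ + _)%N.
by apply: eq_bigr => i _; rewrite nth_rcons ltn_ord.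
Qed.

Definition sp (n : nat) : R := \sum_(i < n) p i.

Lemma spS n : sp n.+1 = sp n + p n.
Proof. by rewrite /sp big_ord_recr. Qed.

Lemma tot n : \sum_(bs <- bseqs n) pi_b bs = 1.
Proof.
elim: n => [|n IH]; first by rewrite /= big_seq1 /pi_b big_ord0.
rewrite sum_bseqsS -{}IH; apply: eq_big_seq => bs hbs.
by rewrite !pi_rcons -mulrDr addrC subrK mulr1.
Qed.

Lemma tot_mul n (c : R) : \sum_(bs <- bseqs n) pi_b bs * c = c.
Proof. by rewrite -big_distrl /= tot; exact: mul1r. Qed.

Lemma marg n (Q : bool -> bool) :
  \sum_(bs <- bseqs n.+1 | Q (nth false bs n)) pi_b bs =
  (if Q true then p n else 0) + (if Q false then 1 - p n else 0).
Proof.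
rewrite big_mkcond sum_bseqsS.
rewrite (eq_big_seq (fun bs => pi_b bs *
   ((if Q true then p n else 0) + (if Q false then 1 - p n else 0)))).
    exact: tot_mul.
move=> bs /size_bseqs sz; rewrite !nth_rcons sz ltnn eqxx !pi_rcons sz.
by case: (Q true); case: (Q false) => /=; ring.
Qed.

Lemma var_le n :
  \sum_(bs <- bseqs n) pi_b bs * ((cnt bs)%:R - sp n) ^+ 2 <= sp n.
Proof.
elim: n => [|n IH].
  by rewrite big_seq1 /cnt /sp /= !big_ord0 /= subr0 expr2 mulr0 mulr0.
rewrite sum_bseqsS.
rewrite (eq_big_seq (fun bs => pi_b bs * ((cnt bs)%:R - sp n) ^+ 2 +
    pi_b bs * (p n * (1 - p n)))); last first.
  move=> bs /size_bseqs sz; rewrite !pi_rcons !cnt_rcons sz spS /= addn0 natrD.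
  by ring.
rewrite big_split /= tot_mul spS.
have /andP[h1 h2] := p01 n.
have : p n * (1 - p n) <= p n by nra.
lra.
Qed.

Lemma sum_iota_eq1 M a (x : R) : (a < M)%N ->
  \sum_(s <- iota 0 M) (if s == a then x else 0) = x.
Proof.
move=> aM; rewrite -(big_mkcond (fun s => s == a)) /=.
rewrite -big_filter.
have -> : [seq s <- iota 0 M | s == a] = [:: a].
  rewrite (@eq_filter _ _ (pred1 a)) //.
  elim: M aM => // M IH aM.
  rewrite -addn1 iotaD filter_cat /= add0n.
  case: (ltnP a M) => h.
    by rewrite IH // (_ : (M == a) = false) ?cats0 //; apply/eqP; lia.
  have -> : a = M by lia.
  rewrite eqxx (_ : [seq x <- iota 0 M | pred1 M x] = [::]) //.
  apply/eqP; rewrite -[_ == _]negbK -has_filter; apply/hasPn => y.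
  by rewrite mem_iota add0n /= => hy; apply/eqP; lia.
by rewrite big_seq1.
Qed.

Lemma sum_iota_range M c (g : nat -> R) : (c < M)%N ->
  \sum_(s <- iota 0 M) (if (1 <= s <= c)%N then g s else 0) = \sum_(1 <= s < c.+1) g s.
Proof.
move=> cM.
rewrite (big_nat_widen 1 c.+1 M) //.
have -> : iota 0 M = index_iota 0 M by rewrite /index_iota subn0.
case: M cM => // M cM.
rewrite big_ltn // /= add0r big_mkcond /=.
rewrite [RHS]big_mkcond /=; apply: eq_big_nat => i /andP[h1 h2]; by rewrite h1 ltnS.
Qed.

Definition K0 : nat -> nat := fun _ => 0%N.

Lemma upf_sum M bs c K : (0 < c)%N -> (forall j, (1 <= j <= c)%N -> (1 <= K j)%N) ->
  (c + size bs < M)%N ->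
  \sum_(ss <- sseqs M (size bs)) urn_path_factor F c K bs ss = 1.
Proof.
elim: bs c K => [|b bs IH] c K c0 HK hM; first by rewrite /= big_seq1.
rewrite /= in hM; rewrite /= sum_sseqsS; case: b.
  rewrite (eq_bigr (fun s => if s == c.+1 then 1 else 0)).
    by apply: sum_iota_eq1; rewrite /= in hM; lia.
  move=> s _; rewrite /= -big_distrr /= IH //.
  - by case: eqP; rewrite ?mulr1 ?mulr0.
  - move=> j hj; case: eqP => // /eqP hjc; apply: HK; lia.
  - by rewrite /= in hM; lia.
set Z := \sum_(1 <= j < c.+1) F (K j)%:R.
have Zgt0 : 0 < Z.
  rewrite /Z big_ltn //; have h1 : 0 < F (K 1%N)%:R by apply: Fpos; apply: HK; lia.
  have : 0 <= \sum_(2 <= j < c.+1) F (K j)%:R.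
    rewrite big_nat_cond; apply: sumr_ge0 => j /andP[/andP[hj1 hj2] _].
    by apply/ltW/Fpos/HK; lia.
  lra.
rewrite (eq_bigr (fun s => if (1 <= s <= c)%N then F (K s)%:R / Z else 0)).
  rewrite sum_iota_range; last by rewrite /= in hM; lia.
  by rewrite -mulr_suml divff // gt_eqF.
move=> s _; rewrite /= -big_distrr /=; case: ifP => hs; last exact: mul0r.
rewrite IH //.
- exact: mulr1.
- move=> j hj; case: eqP => [->|_]; first by lia.
  exact: HK.
- by rewrite /= in hM; lia.
Qed.

Lemma upf_cons c K b bs s ss : urn_path_factor F c K (b::bs) (s::ss) =
  if b then (if s == c.+1 then 1 else 0) *
      urn_path_factor F c.+1 (fun j => if j == c.+1 then 1%N else K j) bs ss
  else (if (1 <= s <= c)%N then F (K s)%:R / (\sum_(1 <= j < c.+1) F (K j)%:R) else 0) *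
      urn_path_factor F c (fun j => if j == s then (K j).+1 else K j) bs ss.
Proof. by []. Qed.

Lemma upf_valid bs ss c K i : urn_path_factor F c K bs ss != 0 -> size bs = size ss ->
  (i < size bs)%N ->
  [/\ (1 <= nth 0 ss i)%N,
      (nth 0 ss i <= c + \sum_(j < i.+1) (nth false bs j : nat))%N &
      (nth false bs i -> nth 0 ss i = c + \sum_(j < i.+1) (nth false bs j : nat))%N].
Proof.
elim: bs ss c K i => [|b bs IH] [|s ss] c K i // hnz [hsz] hi.
rewrite upf_cons in hnz; rewrite /= in hi.
have hrest : forall a (x : R), a * x != 0 -> x != 0.
  by move=> a x; apply: contra => /eqP->; rewrite mulr0.
case: i hi => [|i] hi.
  rewrite big_ord1 /=; case: b hnz => hnz.
    have : (s == c.+1).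
      by move: hnz; case: (s =P c.+1) => [_ //|_] /=; rewrite mul0r eqxx.
    by move/eqP->; split => //; lia.
  have : (1 <= s <= c)%N.
    by case: (boolP (1 <= s <= c)%N) hnz => [//|h] /=; rewrite mul0r eqxx.
  by move=> hs; split => //; lia.
rewrite big_ord_recl /=.
have Hs : forall j : 'I_i.+1, (nth false (b :: bs) (bump 0 j) : nat) = nth false bs j by [].
rewrite (eq_bigr _ (fun j _ => Hs j)); clear Hs.
case: b hnz => hnz.
  have [h1 h2 h3] := IH ss c.+1 _ i (hrest _ _ hnz) hsz hi.
  rewrite /=; set X := \sum_(j < i.+1) _ in h2 h3 *.
  by split; [done | lia | move=> hb; rewrite (h3 hb); lia].
have [h1 h2 h3] := IH ss c _ i (hrest _ _ hnz) hsz hi.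
rewrite /=; set X := \sum_(j < i.+1) _ in h2 h3 *.
by split; [done | lia | move=> hb; rewrite (h3 hb); lia].
Qed.


Variables (d : measure_display) (T : measurableType d) (P : probability T R)
  (B : nat -> T -> bool) (S : nat -> T -> nat).
Hypothesis hlaw : forall (bs : seq bool) (ss : seq nat), size bs = size ss ->
     measurable (urn_cylinder B S bs ss) /\
     P (urn_cylinder B S bs ss) = (urn_path_prob p F bs ss)%:E.

Local Notation Cyl := (urn_cylinder B S).

Lemma cyl_meas bs ss : size bs = size ss -> measurable (Cyl bs ss).
Proof. by move=> h; case: (hlaw h). Qed.

Lemma cyl_prob bs ss : size bs = size ss -> P (Cyl bs ss) = (urn_path_prob p F bs ss)%:E.
Proof. by move=> h; case: (hlaw h). Qed.
Definition upp (x : seq bool * seq nat) := urn_path_prob p F x.1 x.2.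
Definition pairs n := [seq (bs, ss) | bs <- bseqs n, ss <- sseqs n.+1 n].

Lemma pairs_size n x : x \in pairs n -> size x.1 = n /\ size x.2 = n.
Proof.
case/allpairsP => -[bs ss] /= [hb hs ->] /=.
by rewrite (size_bseqs hb) (size_sseqs hs).
Qed.

Lemma uniq_pairs n : uniq (pairs n).
Proof.
apply: allpairs_uniq; [exact: uniq_bseqs | exact: uniq_sseqs |].
by move=> [a b] [c e] _ _ /= [-> ->].
Qed.

Lemma sum_pairs n (f : seq bool * seq nat -> R) :
  \sum_(x <- pairs n) f x = \sum_(bs <- bseqs n) \sum_(ss <- sseqs n.+1 n) f (bs, ss).
Proof. exact: big_allpairs. Qed.

Lemma sum_upf_top n bs : size bs = n ->
  pi_b bs * \sum_(ss <- sseqs n.+1 n) urn_path_factor F 0 (fun _ => 0%N) bs ss = pi_b bs.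
Proof.
case: bs => [|b bs] <-; first by rewrite /= big_seq1 mulr1.
case: b.
  rewrite (_ : size (true :: bs) = (size bs).+1) // sum_sseqsS.
  rewrite (eq_bigr (fun s => if s == 1%N then 1 else 0)); first by rewrite sum_iota_eq1 ?mulr1.
  move=> s _; rewrite -big_distrr /=.
  rewrite (eq_bigr (fun t => urn_path_factor F 1 (fun j => if j == 1%N then 1%N else 0%N) bs t)) //.
  rewrite (upf_sum (M := (size bs).+2) (c := 1%N)) //.
  - exact: mulr1.
  - by move=> j hj; case: eqP => // hj1; lia.
have -> : pi_b (false :: bs) = 0.
  by rewrite /pi_b big_ord_recl /= hp0 subrr mul0r.
by rewrite mul0r.
Qed.

Lemma sum_pairs_Q n (Q : pred (seq bool)) :
  \sum_(x <- pairs n | Q x.1) upp x = \sum_(bs <- bseqs n | Q bs) pi_b bs.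
Proof.
rewrite big_mkcond sum_pairs [RHS]big_mkcond; apply: eq_big_seq => bs hbs /=.
case: (Q bs); last by rewrite big1.
rewrite /upp /urn_path_prob /= -big_distrr /=.
exact: sum_upf_top (size_bseqs hbs).
Qed.

Lemma sum_pairs_nz n (Q : pred (seq bool)) :
  \sum_(x <- pairs n | Q x.1 && (upp x != 0)) upp x = \sum_(x <- pairs n | Q x.1) upp x.
Proof.
rewrite big_mkcondr; apply: eq_bigr => x _.
by case: eqP => // ->.
Qed.

Lemma cyl_inj x y w : size x.1 = size y.1 -> size x.2 = size y.2 ->
  Cyl x.1 x.2 w -> Cyl y.1 y.2 w -> x = y.
Proof.
case: x y => [bs ss] [bs' ss'] /= h1 h2 [hb hs] [hb' hs'].
congr pair.
  by apply: (@eq_from_nth _ false) => // i hi; rewrite -hb // hb' // -h1.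
by apply: (@eq_from_nth _ 0%N) => // i hi; rewrite -hs // hs' // -h2.
Qed.

Lemma bigsetU_mem (I : eqType) (s : seq I) (Q : pred I) (A : I -> set T) w :
  (\big[setU/set0]_(x <- s | Q x) A x) w <-> exists2 x, x \in s & Q x /\ A x w.
Proof.
elim: s => [|x s IH]; first by rewrite big_nil; split => // -[].
rewrite big_cons; case: ifP => hQ.
  split.
    case=> [h|/IH[y hy hh]]; first by exists x; rewrite ?mem_head.
    by exists y => //; rewrite in_cons hy orbT.
  case=> y; rewrite in_cons => /orP[/eqP->|hy] [hQy hA]; first by left.
  by right; apply/IH; exists y.
split; first by case/IH => y hy hh; exists y => //; rewrite in_cons hy orbT.
case=> y; rewrite in_cons => /orP[/eqP->|hy] [hQy hA]; first by rewrite hQ in hQy.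
by apply/IH; exists y.
Qed.

Lemma measure_union_seq n (s : seq (seq bool * seq nat)) (Q : pred _) :
  uniq s -> (forall x, x \in s -> size x.1 = n /\ size x.2 = n) ->
  P (\big[setU/set0]_(x <- s | Q x) Cyl x.1 x.2) = \big[adde/0%E]_(x <- s | Q x) P (Cyl x.1 x.2).
Proof.
elim: s => [|x s IH] /=; first by rewrite !big_nil measure0.
move=> /andP[hx hu] hsz.
have hsz' : forall y, y \in s -> size y.1 = n /\ size y.2 = n.
  by move=> y hy; apply: hsz; rewrite in_cons hy orbT.
rewrite !big_cons; case: ifP => hQ; last exact: IH.
have [hx1 hx2] := hsz x (mem_head _ _).
rewrite measureU.
- by congr (_ + _); apply: IH.
- by apply: cyl_meas; rewrite hx1 hx2.
- rewrite big_seq_cond; apply: bigsetU_measurable => y /andP[hy _].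
  by have [h1 h2] := hsz' y hy; apply: cyl_meas; rewrite h1 h2.
- apply/seteqP; split => // w [hw /bigsetU_mem [y hy [_ hw']]].
  have [h1 h2] := hsz' y hy.
  have exy := cyl_inj (etrans hx1 (esym h1)) (etrans hx2 (esym h2)) hw hw'.
  by move: hx; rewrite exy hy.
Qed.

Definition Ev n (Q : pred (seq bool)) : set T :=
  \big[setU/set0]_(x <- pairs n | Q x.1 && (upp x != 0)) Cyl x.1 x.2.

Lemma Ev_meas n Q : measurable (Ev n Q).
Proof.
rewrite /Ev big_seq_cond; apply: bigsetU_measurable => y /andP[hy _].
by have [h1 h2] := pairs_size hy; apply: cyl_meas; rewrite h1 h2.
Qed.

Lemma Ev_prob n Q : P (Ev n Q) = (\sum_(bs <- bseqs n | Q bs) pi_b bs)%:E.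
Proof.
rewrite /Ev (measure_union_seq (n := n)); [|exact: uniq_pairs|exact: pairs_size].
rewrite big_seq_cond (eq_bigr (fun x => (upp x)%:E)); last first.
  move=> x /andP[hx _].
  by have [h1 h2] := pairs_size hx; apply: cyl_prob; rewrite h1 h2.
by rewrite -big_seq_cond sumEFin sum_pairs_nz sum_pairs_Q.
Qed.

Lemma Ev_in n (Q : pred (seq bool)) bs ss w : (bs, ss) \in pairs n ->
  upp (bs, ss) != 0 -> Q bs -> Cyl bs ss w -> Ev n Q w.
Proof. by move=> h1 h2 h3 h4; apply/bigsetU_mem; exists (bs, ss) => //; rewrite h3 h2. Qed.

Lemma Ev_out n Q w : Ev n Q w ->
  exists bs ss, [/\ (bs, ss) \in pairs n, upp (bs, ss) != 0, Q bs & Cyl bs ss w].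
Proof.
case/bigsetU_mem => -[bs ss] hx [/andP[hQ hnz] hc].
by exists bs, ss.
Qed.

Lemma ae_good : {ae P, forall w, forall n, Ev n predT w}.
Proof.
apply: ae_foralln => n.
exists (~` Ev n predT); split => //.
- exact/measurableC/Ev_meas.
- transitivity (1 - P (Ev n predT))%E; first exact/probability_setC/Ev_meas.
  by rewrite Ev_prob (eq_bigl xpredT) // tot subee.
Qed.

Lemma ncolorsS n w : ncolors B n.+1 w = (ncolors B n w + B n w)%N.
Proof. by rewrite /ncolors big_ord_recr. Qed.

Lemma ncolors_mono w a b : (a <= b)%N -> (ncolors B a w <= ncolors B b w)%N.
Proof.
move=> /subnK <-; elim: (b - a)%N => [|k IH]; first by rewrite add0n.
by rewrite addSn ncolorsS; lia.
Qed.

Lemma C_eq w bs ss : Cyl bs ss w -> ncolors B (size bs) w = cnt bs.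
Proof. by rewrite /ncolors /cnt; case=> hb _; apply: eq_bigr => i _; rewrite hb. Qed.

Lemma good_to_Ev n (Q : pred (seq bool)) w : Ev n predT w ->
  (forall bs ss, Cyl bs ss w -> size bs = n -> Q bs) -> Ev n Q w.
Proof.
case/Ev_out => bs [ss [hx hnz _ hc]] hQ.
have [h1 _] := pairs_size hx.
by apply: (Ev_in hx hnz) => //; apply: hQ hc h1.
Qed.

Lemma good_info w n : Ev n predT w -> exists bs ss, [/\ size bs = n, size ss = n,
  urn_path_factor F 0 (fun _ => 0%N) bs ss != 0 & Cyl bs ss w].
Proof.
case/Ev_out => bs [ss [hx hnz _ hc]].
have [h1 h2] := pairs_size hx.
exists bs, ss; split => //.
by move: hnz; apply: contra => /eqP; rewrite /upp /urn_path_prob /= => ->; rewrite mulr0.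
Qed.

Lemma good_S w : (forall n, Ev n predT w) -> forall m, (1 <= m)%N ->
  [/\ (1 <= S m w)%N, (S m w <= ncolors B m w)%N & (B m.-1 w -> S m w = ncolors B m w)].
Proof.
move=> hG m hm.
have [bs [ss [hb hs hnz hc]]] := good_info (hG m).
have hi : (m.-1 < size bs)%N by rewrite hb; lia.
have [h1 h2 h3] := upf_valid (i := m.-1) hnz (etrans hb (esym hs)) hi.
have eS : S m w = nth 0%N ss m.-1.
  by case: hc => _ h; rewrite -h ?hs ?prednK //; lia.
have eB : B m.-1 w = nth false bs m.-1 by case: hc => h _; rewrite h.
have eC : ncolors B m w = (\sum_(j < m.-1.+1) (nth false bs j : nat))%N.
  by rewrite prednK // -{1}hb (C_eq hc) /cnt hb.
rewrite add0n in h2 h3.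
by rewrite eS eB eC; split.
Qed.

Lemma BC1 (E : nat -> set T) : (forall k, measurable (E k)) ->
  (\sum_(0 <= k <oo) P (E k) < +oo)%E ->
  {ae P, forall w, exists m, forall k, (m <= k)%N -> ~ E k w}.
Proof.
move=> mE hs; exists (lim_sup_set E); split.
- by apply: bigcap_measurable => // j _; apply: bigcup_measurable => k _; exact: mE.
- exact: lim_sup_set_cvg0.
- move=> w /= hw n _; apply: contrapT => hn; apply: hw.
  by exists n => k hk Ek; apply: hn; exists k.
Qed.

Lemma ncolors_le_of w m : (forall k, (m <= k)%N -> B k w = false) ->
  forall n, (ncolors B n w <= m)%N.
Proof.
move=> hB n; suff : (ncolors B n w <= minn n m)%N by lia.
elim: n => [|n IH]; first by rewrite /ncolors big_ord0.
rewrite ncolorsS; case: (leqP m n) => hmn.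
  by rewrite hB //; lia.
have := leq_b1 (B n w); lia.
Qed.

Lemma part1 : (\sum_(0 <= n <oo) (p n)%:E < +oo)%E ->
  {ae P, forall w, exists M : nat, forall n, (ncolors B n w <= M)%N}.
Proof.
move=> hsum.
pose E k := Ev k.+1 (fun bs => nth false bs k).
have PE k : P (E k) = (p k)%:E.
  by rewrite /E Ev_prob; congr EFin; rewrite -[RHS]addr0; exact: (marg k id).
have hsum' : (\sum_(0 <= k <oo) P (E k) < +oo)%E.
  by rewrite (eq_eseriesr (fun k _ => PE k)).
have hae := BC1 (E := E) (fun k => Ev_meas _ _) hsum'.
move: hae ae_good; apply: filterS2 => w [m hm] hG.
exists m; apply: ncolors_le_of => k hk.
apply/negbTE/negP => hb; apply: (hm k hk); apply: good_to_Ev => // bs ss [hc _] hsz.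
by rewrite -hc ?hsz.
Qed.

Lemma part3 : (\sum_(1 <= n <oo) (1 - p n)%:E < +oo)%E ->
  {ae P, forall w,
         (exists N : nat, forall n, (N <= n)%N -> (1 <= n)%N ->
            forall m, (1 <= m < n)%N -> S m w <> S n w) /\
         (forall c : nat, exists M : nat, forall n, (M <= n)%N -> S n w <> c) /\
         (exists M : nat, forall c : nat,
            (exists i j, (1 <= i < j)%N /\ S i w = c /\ S j w = c) -> (c <= M)%N)}.
Proof.
move=> hsum.
pose E k := Ev k.+1 (fun bs => ~~ nth false bs k).
have PE k : P (E k) = (1 - p k)%:E.
  by rewrite /E Ev_prob; congr EFin; rewrite -[RHS]add0r; exact: (marg k negb).
have hsum' : (\sum_(0 <= k <oo) P (E k) < +oo)%E.
  rewrite (eq_eseriesr (fun k _ => PE k)).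
  rewrite (nneseries_split 0 1); last by move=> k _; have := p01 k; rewrite lee_fin; lra.
  by rewrite add0n big_nat1 hp0 subrr add0e.
have hae := BC1 (E := E) (fun k => Ev_meas _ _) hsum'.
move: hae ae_good; apply: filterS2 => w [m hm] hG.
have hB : forall k, (m <= k)%N -> B k w = true.
  move=> k hk; apply/negPn/negP => hb; apply: (hm k hk); apply: good_to_Ev => // bs ss [hc _] hsz.
  by rewrite -hc ?hsz.
have h1 : forall n, (m.+1 <= n)%N -> (1 <= n)%N ->
    forall m', (1 <= m' < n)%N -> S m' w <> S n w.
  move=> n hn hn1 m' /andP[hm1 hm2].
  have [_ _ e] := good_S hG hn1.
  have [_ a _] := good_S hG hm1.
  have hBn : B n.-1 w by apply: hB; lia.
  rewrite (e hBn).
  have hmono : (ncolors B m' w <= ncolors B n.-1 w)%N by apply: ncolors_mono; lia.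
  have -> : ncolors B n w = (ncolors B n.-1 w + B n.-1 w)%N by rewrite -ncolorsS prednK //; lia.
  rewrite hBn; lia.
split; first by exists m.+1.
split.
  move=> c.
  case: (pselect (exists n0, (m.+1 <= n0)%N /\ S n0 w = c)) => [[n0 [hn0 hc]]|hno].
    by exists n0.+1 => n hn hSn; apply: (h1 n _ _ n0); lia.
  exists m.+1 => n hn hSn; apply: hno; by exists n.
exists (\max_(j < m.+1) S j w) => c [i [j [/andP[hi hij] [hSi hSj]]]].
have hj : (j < m.+1)%N.
  rewrite ltnNge; apply/negP => hj.
  by apply: (h1 j hj _ i); [lia | lia | rewrite hSi hSj].
rewrite -hSj; exact: (leq_bigmax (F := fun j : 'I_m.+1 => S j w) (Ordinal hj)).
Qed.

Lemma sp0 : sp 0 = 0.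
Proof. by rewrite /sp big_ord0. Qed.

Lemma sp_mono a b : (a <= b)%N -> sp a <= sp b.
Proof.
move=> /subnK <-; elim: (b - a)%N => [|k IH]; first by rewrite add0n.
rewrite addSn spS; have := p01 (k + a); case/andP => h1 _; lra.
Qed.

Lemma sp_le n : sp n <= n%:R.
Proof.
elim: n => [|n IH]; first by rewrite sp0.
rewrite spS -natr1; have := p01 n; case/andP => _ h; lra.
Qed.

Lemma sp_unb : (\sum_(0 <= n <oo) (p n)%:E = +oo)%E -> forall x : R, exists n, x <= sp n.
Proof.
move=> hinf x; apply: contrapT => hno.
have hb : forall n, sp n <= x.
  move=> n; apply/ltW; rewrite ltNge; apply/negP => h; apply: hno; by exists n.
have : (\sum_(0 <= n <oo) (p n)%:E <= x%:E)%E.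
  apply: lime_le; first by apply: is_cvg_nneseries => n _ _; rewrite lee_fin; case/andP: (p01 n).
  apply: nearW => n; rewrite sumEFin lee_fin big_mkord; exact: hb.
by rewrite hinf.
Qed.

Lemma cheb (delta : R) n : 0 < delta -> 0 < sp n ->
  (P (Ev n (fun bs => (delta * sp n < `|(cnt bs)%:R - sp n|)%R)) <=
    ((1 / (delta ^+ 2 * sp n))%R)%:E)%E.
Proof.
move=> hd hs; rewrite Ev_prob lee_fin.
pose Q := (fun bs : seq bool => delta * sp n < `|(cnt bs)%:R - sp n|).
change (\sum_(bs <- bseqs n | Q bs) pi_b bs <= 1 / (delta ^+ 2 * sp n)).
set c := (delta * sp n) ^+ 2.
have hc : 0 < c by rewrite /c exprn_gt0 // mulr_gt0.
apply: (@le_trans _ _ (\sum_(bs <- bseqs n | Q bs) pi_b bs * (((cnt bs)%:R - sp n) ^+ 2 / c))).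
  apply: ler_sum => bs hQ.
  rewrite -{1}[pi_b bs]mulr1; apply: ler_wpM2l; first exact: pi_ge0.
  rewrite ler_pdivlMr // mul1r /c.
  move: hQ; rewrite /Q ltr_normr => /orP[h|h].
    have : 0 <= delta * sp n by apply/ltW/mulr_gt0.
    by move=> h0; nra.
  have : 0 <= delta * sp n by apply/ltW/mulr_gt0.
  by move=> h0; nra.
apply: (@le_trans _ _ (\sum_(bs <- bseqs n) pi_b bs * (((cnt bs)%:R - sp n) ^+ 2 / c))).
  rewrite [X in _ <= X](bigID Q) /= lerDl.
  apply: sumr_ge0 => bs _; apply: mulr_ge0; first exact: pi_ge0.
  by apply: divr_ge0; [exact: sqr_ge0 | exact: ltW].
under eq_bigr do rewrite mulrA.
rewrite -mulr_suml.
apply: (@le_trans _ _ (sp n / c)).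
  by apply: ler_wpM2r; [rewrite invr_ge0 ltW | exact: var_le].
rewrite /c le_eqVlt; apply/orP; left; apply/eqP; field.
by apply/andP; split; apply/lt0r_neq0.
Qed.

Lemma sp_ge0 n : 0 <= sp n.
Proof. by rewrite -sp0; apply: sp_mono. Qed.

Lemma bnd_help (y x s : R) : 0 < y -> 1 <= x -> x * x <= s ->
  1 / (y^-1 ^+ 2 * s) <= 2 * y ^+ 2 * (x^-1 - (x + 1)^-1).
Proof.
move=> hy hx hs.
have s0 : 0 < s by nra.
have x0 : 0 < x by lra.
have x1 : 0 < x + 1 by lra.
rewrite -subr_ge0.
have -> : 2 * y ^+ 2 * (x^-1 - (x + 1)^-1) - 1 / (y^-1 ^+ 2 * s) =
   y ^+ 2 * (s^-1 * (x * (x + 1))^-1 * (2 * s - x * (x + 1))).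
  by field; rewrite !lt0r_neq0.
apply: mulr_ge0; first exact: sqr_ge0.
apply: mulr_ge0; first by apply: mulr_ge0; rewrite invr_ge0; nra.
nra.
Qed.

Lemma det (C : nat -> nat) (hC : forall a b, (a <= b)%N -> (C a <= C b)%N)
  (nk : nat -> nat)
  (nk1 : forall k, (k * k)%:R <= sp (nk k))
  (nk2 : forall k n, (k * k)%:R <= sp n -> (nk k <= n)%N)
  (nk3 : forall k, sp (nk k) <= (k * k)%:R + 1)
  (H : forall j : nat, exists K, forall k, (K <= k)%N ->
      `|(C (nk k))%:R - sp (nk k)| <= sp (nk k) / (j.+1)%:R) :
  (forall M, exists n, (M <= C n)%N) /\ (fun n => (C n)%:R / sp n) @ \oo --> (1 : R).
Proof.
split.
  move=> M; have [K HK] := H 1%N.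
  exists (nk (K + 2 * M)); set k := (K + 2 * M)%N.
  have := HK k (leq_addr _ _); rewrite ler_norml => /andP[h _].
  have h2 := nk1 k.
  have h3 : (2 * M <= k * k)%N by rewrite /k; nia.
  rewrite -(ler_nat R); move: h3; rewrite -(ler_nat R) natrM => h3.
  rewrite natrM in h2; lra.
apply/cvgrPdist_le => e he.
set j := Num.truncn (4 / e).
have hj : 4 / e < (j.+1)%:R by exact: truncnS_gt.
have [K HK] := H j.
set K0 := (Num.truncn (16 / e)).+1.
have hK0 : 16 / e < K0%:R by exact: truncnS_gt.
set Kb := maxn K K0.
exists (nk Kb) => // n /= hn.
have ub : forall k, (k * k)%:R <= sp n -> (k <= n)%N.
  move=> k hk; have : ((k * k)%:R <= n%:R :> R) by apply: le_trans hk (sp_le n).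
  by rewrite ler_nat => h; nia.
have ex0 : exists k, (k * k)%:R <= sp n by exists 0%N; rewrite mul0n sp_ge0.
case: (ex_maxnP ex0 ub) => k hk hmax.
have hKb : (Kb <= k)%N.
  by apply: hmax; apply: le_trans (nk1 Kb) (sp_mono hn).
have hlt : sp n < (k.+1 * k.+1)%:R.
  by rewrite ltNge; apply/negP => h; have := hmax _ h; lia.
have ha : (nk k <= n)%N := nk2 _ _ hk.
have hb : (n <= nk k.+1)%N.
  rewrite leqNgt; apply/negP => h.
  have := le_trans (nk1 k.+1) (sp_mono (ltnW h)); rewrite leNgt hlt.
  by [].
have hCa := hC _ _ ha; have hCb := hC _ _ hb.
have hKk1 : (K <= k)%N by lia.
have hKk2 : (K <= k.+1)%N by lia.
have hKk : (K0 <= k)%N by lia.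
have hk1 : (1 <= k)%N by lia.
have sq : forall m : nat, (m * m)%:R = m%:R * m%:R :> R by move=> m; rewrite natrM.
apply: (ratio_bound (x := k%:R) (sa := sp (nk k)) (sb := sp (nk k.+1))
   (Ca := (C (nk k))%:R) (Cb := (C (nk k.+1))%:R) (K0 := K0%:R) (y := (j.+1)%:R)).
- exact: he.
- exact: hK0.
- by rewrite ler_nat.
- by rewrite ler1n.
- exact: hj.
- by rewrite ler1n.
- by rewrite -sq; exact: nk1.
- by rewrite natr1 -sq; exact: nk1.
- by rewrite natr1 -sq; exact: nk3.
- by rewrite -sq.
- by rewrite natr1 -sq.
- by rewrite ler_nat.
- by rewrite ler_nat.
- exact: HK.
- exact: HK.
Qed.

Lemma part2 : (\sum_(0 <= n <oo) (p n)%:E = +oo)%E ->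
  {ae P, forall w, forall M : nat, exists n, (M <= ncolors B n w)%N} /\
  {ae P, forall w, (fun n => (ncolors B n w)%:R / \sum_(i < n) p i) @ \oo --> (1 : R)}.
Proof.
move=> hinf; have unb := sp_unb hinf.
pose nk k := ex_minn (unb (k * k)%:R).
have nk1 : forall k, (k * k)%:R <= sp (nk k).
  by move=> k; rewrite /nk; case: ex_minnP.
have nk2 : forall k n, (k * k)%:R <= sp n -> (nk k <= n)%N.
  by move=> k n h; rewrite /nk; case: ex_minnP => m _ hmin; apply: hmin.
have nk3 : forall k, sp (nk k) <= (k * k)%:R + 1.
  move=> k; rewrite /nk; case: ex_minnP => m hm hmin.
  case: m hm hmin => [|m] hm hmin.
    by rewrite sp0; have := ler0n R (k * k); move=> h; lra.
  have : ~~ ((k * k)%:R <= sp m) by apply/negP => h; have := hmin m h; lia.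
  rewrite -ltNge => h; rewrite spS; have := p01 m; case/andP => _ h1; lra.
have hj : forall j : nat, {ae P, forall w, exists K, forall k, (K <= k)%N ->
    `|(ncolors B (nk k) w)%:R - sp (nk k)| <= sp (nk k) / (j.+1)%:R}.
  move=> j.
  pose E k := Ev (nk k) (fun bs => ((j.+1)%:R^-1 * sp (nk k) < `|(cnt bs)%:R - sp (nk k)|)%R).
  pose c := ((j.+1)%:R ^+ 2 : R).
  have c0 : 0 <= c by exact: sqr_ge0.
  pose bnd := fun k : nat => if k is k'.+1 then
    2 * c * ((k'.+1)%:R^-1 - ((k'.+1)%:R + 1)^-1) else 1.
  have closed : forall n, \sum_(k < n.+1) bnd k = 1 + 2 * c * (1 - (n.+1)%:R^-1).
    elim => [|n IH]; first by rewrite big_ord1 /= invr1 subrr mulr0 addr0.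
    rewrite big_ord_recr /= IH natr1; ring.
  have bnd_sum : forall n, \sum_(k < n) bnd k <= 1 + 2 * c.
    case=> [|n]; first by rewrite big_ord0; lra.
    rewrite closed lerD2l -[X in _ <= X]mulr1; apply: ler_wpM2l.
      by apply: mulr_ge0.
    have h : 0 <= (n.+1)%:R^-1 :> R by rewrite invr_ge0.
    by rewrite lerBlDr lerDl.
  have PE : forall k, (P (E k) <= (bnd k)%:E)%E.
    case=> [|k]; first exact/probability_le1/Ev_meas.
    have hs : 0 < sp (nk k.+1).
      have := nk1 k.+1; rewrite natrM => h.
      have : 1 <= (k.+1)%:R * (k.+1)%:R :> R by apply: mulr_ege1; rewrite ler1n.
      lra.
    apply: le_trans (cheb (delta := (j.+1)%:R^-1) (n := nk k.+1) _ hs) _.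
      by rewrite invr_gt0.
    rewrite lee_fin /bnd; apply: bnd_help.
    - by rewrite ltr0n.
    - by rewrite ler1n.
    - by rewrite -natrM.
  have hsum : (\sum_(0 <= k <oo) P (E k) < +oo)%E.
    apply: (@le_lt_trans _ _ ((1 + 2 * c)%:E)); last exact: ltry.
    apply: lime_le; first by apply: is_cvg_nneseries => k _ _; exact: measure_ge0.
    apply: nearW => n.
    apply: (@le_trans _ _ (\sum_(0 <= k < n) (bnd k)%:E)%E).
      by apply: lee_sum => k _; exact: PE.
    by rewrite sumEFin lee_fin big_mkord; exact: bnd_sum.
  have hae := BC1 (E := E) (fun k => Ev_meas _ _) hsum.
  move: ae_good hae; apply: filterS2 => w hG [K hK].
  exists K => k hk.
  rewrite leNgt; apply/negP => hlt; apply: (hK k hk); apply: good_to_Ev => // bs ss hc hsz.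
  by rewrite /= -(C_eq hc) hsz mulrC.
have hall := ae_foralln hj.
split; move: hall; apply: filterS => w hw.
  exact: (det (C := fun n => ncolors B n w) (fun a b => @ncolors_mono w a b) nk1 nk2 nk3 hw).1.
exact: (det (C := fun n => ncolors B n w) (fun a b => @ncolors_mono w a b) nk1 nk2 nk3 hw).2.
Qed.

End Comb.

Unset Implicit Arguments.
Set Strict Implicit.

Theorem theorem3p1 (R : realType) (d : measure_display) (T : measurableType d)
  (P : probability T R) (p : nat -> R) (F : R -> R)
  (B : nat -> T -> bool) (S : nat -> T -> nat)
  (hp0 : p 0%N = 1) (hp : forall n, (1 <= n)%N -> 0 < p n < 1)
  (hF1 : 0 < F 1) (hFinc : forall x y, 1 <= x -> x < y -> F x < F y)
  (hlaw : forall (bs : seq bool) (ss : seq nat), size bs = size ss ->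
     measurable (urn_cylinder B S bs ss) /\
     P (urn_cylinder B S bs ss) = (urn_path_prob p F bs ss)%:E) :
  ((\sum_(0 <= n <oo) (p n)%:E < +oo)%E ->
     {ae P, forall w, exists M : nat, forall n, (ncolors B n w <= M)%N}) /\
  ((\sum_(0 <= n <oo) (p n)%:E = +oo)%E ->
     {ae P, forall w, forall M : nat, exists n, (M <= ncolors B n w)%N} /\
     {ae P, forall w, (fun n => (ncolors B n w)%:R / \sum_(i < n) p i) @ \oo --> (1 : R)} /\
     ((\sum_(1 <= n <oo) (1 - p n)%:E < +oo)%E ->
       {ae P, forall w,
         (exists N : nat, forall n, (N <= n)%N -> (1 <= n)%N ->
            forall m, (1 <= m < n)%N -> S m w <> S n w) /\
         (forall c : nat, exists M : nat, forall n, (M <= n)%N -> S n w <> c) /\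
         (exists M : nat, forall c : nat,
            (exists i j, (1 <= i < j)%N /\ S i w = c /\ S j w = c) -> (c <= M)%N)})).
Proof.
split.
  exact: (part1 hp0 hF1 hFinc hlaw).
move=> hinf.
have [h1 h2] := part2 hp0 hp hF1 hFinc hlaw hinf.
split; first exact: h1.
split; first exact: h2.
exact: (part3 hp0 hp hF1 hFinc hlaw).
Qed.
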